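(* Let $\xi>0$, $\omega_0>0$, and define $\omega^2(k)=\frac{\omega_0^2}{\xi^2}\big((\xi-\cos k)^2+\sin^2 k\big)$, $\Omega_0=\frac{\omega_0}{\xi}|1-\xi|$, $\Omega_D=\frac{\omega_0}{\xi}(1+\xi)$, and for an integer $n$ and real $\omega$ with $\omega^2(k)\ne\omega^2$ for all $k$, $$\mathcal G_n(\omega)=\frac{1}{2\pi}\int_0^{2\pi}\frac{e^{ikn}}{\omega^2(k)-\omega^2}\,dk .$$ Then for $\omega>\Omega_D$ and every integer $n$, $$\mathcal G_n(\omega)=\frac{-1}{\sqrt{(\Omega_D^2-\omega^2)(\Omega_0^2-\omega^2)}}\left(\frac{\Omega_D^2+\Omega_0^2-2\omega^2+2\sqrt{(\Omega_D^2-\omega^2)(\Omega_0^2-\omega^2)}}{\Omega_D^2-\Omega_0^2}\right)^{|n|},$$ which is real-valued.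
   Context: $\mathcal G_n$ is the frequency-domain lattice Green's function (entry with $|p-q|=n$) of the exponentially graded linear chain (masses $m_0\xi^{2p}$, spring constants $m_0\xi^{2p}\omega_0^2$) in the limit of infinitely many particles, in the symmetrized variables $y_p=\xi^pu_p$; $\Omega_0$ and $\Omega_D$ are the lowest and highest (Debye) eigenfrequencies. *)

(* Defs.v *)
From Stdlib Require Import Reals ZArith.
From Coquelicot Require Import Coquelicot.
Open Scope R_scope.

Definition omega2 (xi omega0 k : R) : R :=
  (omega0 ^ 2 / xi ^ 2) * ((xi - cos k) ^ 2 + (sin k) ^ 2).

Definition Omega0 (xi omega0 : R) : R := omega0 / xi * Rabs (1 - xi).
Definition OmegaD (xi omega0 : R) : R := omega0 / xi * (1 + xi).

Definition Gn (xi omega0 : R) (n : Z) (w : R) : C :=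
  (RInt (fun k => cos (k * IZR n) / (omega2 xi omega0 k - w ^ 2)) 0 (2 * PI) / (2 * PI),
   RInt (fun k => sin (k * IZR n) / (omega2 xi omega0 k - w ^ 2)) 0 (2 * PI) / (2 * PI)).

(* Main.v *)
From Stdlib Require Import Reals ZArith Lra Lia.
From Coquelicot Require Import Coquelicot.
Require Import Defs.
Open Scope R_scope.

Lemma seq_grow (K : nat -> R) (d : R) : 1 < d ->
  (forall n, K (S (S n)) = 2 * d * K (S n) - K n) -> K 1%nat = d * K 0%nat ->
  0 < K 0%nat -> forall n, K 0%nat + INR n * (d - 1) * K 0%nat <= K n /\
     (d - 1) * K 0%nat <= K (S n) - K n.
Proof.
  intros Hd Hr H1 H0. induction n as [|n [IH1 IH2]].
  - simpl. split; [lra|]. rewrite H1; lra.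
  - assert (0 <= INR n) by apply pos_INR.
    assert (0 <= INR n * (d - 1) * K 0%nat).
    { apply Rmult_le_pos; [apply Rmult_le_pos|]; lra. }
    assert (G1 : K 0%nat + INR (S n) * (d - 1) * K 0%nat <= K (S n)).
    { rewrite S_INR. lra. }
    split; [exact G1|]. rewrite Hr.
    assert (0 <= INR (S n) * (d - 1) * K 0%nat).
    { apply Rmult_le_pos; [apply Rmult_le_pos|]; try lra. apply pos_INR. }
    assert (0 <= (d-1) * K (S n)) by (apply Rmult_le_pos; lra).
    lra.
Qed.

Lemma seq_zero0 (K : nat -> R) (d M : R) : 1 < d ->
  (forall n, K (S (S n)) = 2 * d * K (S n) - K n) -> K 1%nat = d * K 0%nat ->
  (forall n, Rabs (K n) <= M) -> K 0%nat = 0.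
Proof.
  intros Hd Hr H1 HM.
  assert (gen : forall K : nat -> R, (forall n, K (S (S n)) = 2 * d * K (S n) - K n) ->
     K 1%nat = d * K 0%nat -> (forall n, Rabs (K n) <= M) -> ~ 0 < K 0%nat).
  { clear K Hr H1 HM. intros K Hr H1 HM H0.
    destruct (INR_unbounded (M / ((d-1) * K 0%nat))) as [n Hn].
    destruct (seq_grow K d Hd Hr H1 H0 n) as [G _].
    specialize (HM n). apply Rabs_le_between in HM.
    assert (0 < (d-1) * K 0%nat) by nra.
    apply Rmult_gt_compat_r with (r := (d-1) * K 0%nat) in Hn; [|lra].
    unfold Rdiv in Hn. rewrite Rmult_assoc, Rinv_l in Hn; lra. }
  destruct (Rtotal_order (K 0%nat) 0) as [Hl|[He|Hg]]; auto.
  - exfalso. apply (gen (fun n => - K n)); simpl.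
    + intros n. rewrite Hr. ring.
    + rewrite H1; ring.
    + intros n. rewrite Rabs_Ropp. auto.
    + lra.
  - exfalso. exact (gen K Hr H1 HM Hg).
Qed.

Lemma seq_zero (K : nat -> R) (d M : R) : 1 < d ->
  (forall n, K (S (S n)) = 2 * d * K (S n) - K n) -> K 1%nat = d * K 0%nat ->
  (forall n, Rabs (K n) <= M) -> forall n, K n = 0.
Proof.
  intros Hd Hr H1 HM.
  assert (H0 := seq_zero0 K d M Hd Hr H1 HM).
  assert (forall n, K n = 0 /\ K (S n) = 0).
  { induction n as [|n [IH1 IH2]]. split; auto. rewrite H1, H0; ring.
    split; auto. rewrite Hr, IH1, IH2; ring. }
  intros n; apply H.
Qed.

Section S.
Variables p q : R.
Hypothesis Hq : 0 < q.
Hypothesis Hpq : p + q < 0.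

Lemma D_neg k : p - q * cos k <= p + q.
Proof. assert (H := COS_bound k). nra. Qed.

Lemma D_ne k : p - q * cos k <> 0.
Proof. assert (H := D_neg k). lra. Qed.

Definition gc (m : R) k := cos (k * m) / (p - q * cos k).

Lemma gc_cont m k : continuous (gc m) k.
Proof.
  apply (@ex_derive_continuous R_AbsRing R_NormedModule). unfold gc. auto_derive. apply D_ne.
Qed.

Lemma gc_ex m : ex_RInt (gc m) 0 (2 * PI).
Proof. apply (@ex_RInt_continuous R_CompleteNormedModule). intros; apply gc_cont. Qed.

Lemma cos_int_gen (m : R) : 0 < m -> sin (2*PI*m) = 0 ->
  is_RInt (fun k => cos (k * m)) 0 (2*PI) 0.
Proof.
  intros Hn Hs.
  assert (H : is_RInt (fun k => cos (k * m)) 0 (2*PI)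
     (minus ((fun k => sin (k * m) / m) (2*PI)) ((fun k => sin (k * m) / m) 0))).
  { apply (@is_RInt_derive R_CompleteNormedModule (fun k => sin (k * m) / m)).
    + intros x _. auto_derive. lra. field. lra.
    + intros x _. apply (@ex_derive_continuous R_AbsRing R_NormedModule). auto_derive. auto. }
  replace (minus _ _) with 0 in H; auto.
  simpl. rewrite Rmult_0_l, sin_0, Hs. unfold minus, plus, opp; simpl. field. lra.
Qed.

Lemma cos_int (n : nat) : is_RInt (fun k => cos (k * INR (S n))) 0 (2*PI) 0.
Proof.
  apply cos_int_gen. apply lt_0_INR, Nat.lt_0_succ.
  replace (2 * PI * INR (S n)) with (0 + 2 * INR (S n) * PI) by ring.
  rewrite sin_period, sin_0. auto.
Qed.

Definition I (n : nat) := RInt (gc (INR n)) 0 (2 * PI).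

Lemma I_rec_gen (m : R) : is_RInt (fun k => cos (k * (m+1))) 0 (2*PI) 0 ->
  q * RInt (gc (m+1+1)) 0 (2*PI) = 2 * p * RInt (gc (m+1)) 0 (2*PI) - q * RInt (gc m) 0 (2*PI).
Proof.
  intros Hc.
  assert (H0 := RInt_correct (V:=R_CompleteNormedModule) _ _ _ (gc_ex m)).
  assert (H1 := RInt_correct (V:=R_CompleteNormedModule) _ _ _ (gc_ex (m+1))).
  assert (H2 := RInt_correct (V:=R_CompleteNormedModule) _ _ _ (gc_ex (m+1+1))).
  assert (E := is_RInt_minus (V:=R_NormedModule) _ _ _ _ _ _ (is_RInt_scal _ _ _ (2*p) _ H1)
     (is_RInt_plus _ _ _ _ _ _ (is_RInt_scal _ _ _ q _ H0) (is_RInt_scal _ _ _ 2 _ Hc))).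
  assert (E2 := is_RInt_scal (V:=R_NormedModule) _ _ _ q _ H2).
  apply (is_RInt_unique (V:=R_CompleteNormedModule)) in E2.
  apply (is_RInt_ext (V:=R_NormedModule)) with (g := fun k => scal q (gc (m+1+1) k)) in E.
  - apply (is_RInt_unique (V:=R_CompleteNormedModule)) in E.
    assert (X := eq_trans (eq_sym E2) E). clear E E2.
    unfold scal, minus, plus, opp in X; simpl in X; unfold mult in X; simpl in X.
    lra.
  - intros x _. unfold gc, minus, plus, scal, opp; simpl. unfold mult; simpl.
    replace (x * (m + 1 + 1)) with (x * (m + 1) + x) by ring.
    replace (x * m) with (x * (m + 1) - x) by ring.
    rewrite cos_plus, cos_minus.
    assert (H := D_ne x). field. auto.
Qed.

Lemma I_rec n : q * I (S (S n)) = 2 * p * I (S n) - q * I n.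
Proof.
  unfold I. rewrite !S_INR. apply I_rec_gen. rewrite <- S_INR. apply cos_int.
Qed.

Lemma I_1 : q * I 1 = p * I 0 - 2 * PI.
Proof.
  unfold I. simpl INR.
  assert (H0 := RInt_correct (V:=R_CompleteNormedModule) _ _ _ (gc_ex 0)).
  assert (H1 := RInt_correct (V:=R_CompleteNormedModule) _ _ _ (gc_ex 1)).
  assert (E := is_RInt_minus (V:=R_NormedModule) _ _ _ _ _ _ (is_RInt_scal _ _ _ p _ H0)
     (is_RInt_const (V:=R_NormedModule) 0 (2*PI) 1)).
  assert (E2 := is_RInt_scal (V:=R_NormedModule) _ _ _ q _ H1).
  apply (is_RInt_unique (V:=R_CompleteNormedModule)) in E2.
  apply (is_RInt_ext (V:=R_NormedModule)) with (g := fun k => scal q (gc 1 k)) in E.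
  - apply (is_RInt_unique (V:=R_CompleteNormedModule)) in E.
    assert (X := eq_trans (eq_sym E2) E). clear E E2.
    unfold scal, minus, plus, opp in X; simpl in X; unfold mult in X; simpl in X.
    lra.
  - intros x _. unfold gc, minus, plus, scal, opp; simpl. unfold mult; simpl.
    rewrite Rmult_0_r, Rmult_1_r, cos_0.
    assert (H := D_ne x). field. auto.
Qed.

Lemma I_bound n : Rabs (I n) <= 2 * PI * (1 / (- (p + q))).
Proof.
  unfold I. replace (2 * PI) with (2 * PI - 0) at 2 by ring.
  apply abs_RInt_le_const. assert (H := PI_RGT_0); lra. apply gc_ex.
  intros t _. unfold gc. unfold Rdiv. rewrite Rabs_mult, Rabs_inv.
  assert (H := D_neg t). rewrite (Rabs_left (p - q * cos t)) by lra.
  assert (Hc := COS_bound (t * INR n)).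
  assert (Rabs (cos (t * INR n)) <= 1) by (apply Rabs_le; lra).
  rewrite Rmult_1_l.
  apply Rle_trans with (1 * / - (p - q * cos t)).
  apply Rmult_le_compat_r; [left; apply Rinv_0_lt_compat; lra | auto].
  rewrite Rmult_1_l. apply Rinv_le_contravar; lra.
Qed.

Lemma pow_le_one x m : 0 <= x <= 1 -> x ^ m <= 1.
Proof. intros H. induction m; simpl. lra. assert (0 <= x ^ m) by (apply pow_le; lra). nra. Qed.

Definition s0 := sqrt (p * p - q * q).
Definition rho := (s0 + p) / q.

Lemma s0_pos : 0 < s0.
Proof. unfold s0. apply sqrt_lt_R0. nra. Qed.
Lemma s0_sq : s0 * s0 = p * p - q * q.
Proof. unfold s0. apply sqrt_sqrt. nra. Qed.
Lemma rho_q : rho * q = s0 + p.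
Proof. unfold rho. field. lra. Qed.
Lemma rho_abs : Rabs rho <= 1.
Proof.
  assert (H := s0_sq). assert (H1 := s0_pos). assert (Hr := rho_q).
  assert (s0 < - p) by nra.
  assert (- p - q <= s0) by nra.
  apply Rabs_le. split; nra.
Qed.

Lemma I_closed n : I n = - (2 * PI) / s0 * rho ^ n.
Proof.
  set (c := - (2 * PI) / s0).
  assert (Hs := s0_pos). assert (Hs2 := s0_sq). assert (Hr := rho_q).
  assert (Hc : c * s0 = - (2 * PI)) by (unfold c; field; lra).
  set (K := fun n => (-1) ^ n * (I n - c * rho ^ n)).
  assert (Z : forall n, K n = 0).
  { apply (seq_zero K (- p / q) (2 * PI * (1 / (- (p + q))) + Rabs c)).
    - apply (Rmult_lt_reg_r q); auto. unfold Rdiv. rewrite Rmult_assoc, Rinv_l; lra.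
    - intros m. unfold K. assert (X := I_rec m).
      assert (Y : rho * rho * q = 2 * p * rho - q) by nra.
      apply (Rmult_eq_reg_r q); [|lra]. simpl. field_simplify; [|lra].
      replace (q * I (S (S m))) with (2 * p * I (S m) - q * I m) by lra.
      replace (rho ^ m * rho * rho * q) with (rho ^ m * (rho * rho * q)) by ring.
      set (u := (-1)^m) in *. set (v := rho^m) in *.
      replace (u * I (S (S m)) * q - u * c * rho ^ 2 * v * q) with (u * (q * I (S (S m))) - u*c*v*(rho*rho*q)) by ring.
      rewrite X, Y. ring.
    - unfold K. simpl. assert (X := I_1).
      apply (Rmult_eq_reg_r q); [|lra]. field_simplify; [|lra].
      replace (q * I 1) with (p * I 0 - 2 * PI) by lra.
      replace (c * rho * q) with (c * (s0 + p)) by (rewrite <- Hr; ring).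
      nra.
    - intros m. unfold K. rewrite Rabs_mult, <- RPow_abs.
      replace (Rabs (-1)) with 1 by (rewrite Rabs_left; lra). rewrite pow1, Rmult_1_l.
      eapply Rle_trans. apply Rabs_triang. rewrite Rabs_Ropp.
      apply Rplus_le_compat. apply I_bound.
      rewrite Rabs_mult, <- RPow_abs.
      assert (0 <= Rabs rho ^ m <= 1).
      { split. apply pow_le, Rabs_pos. apply pow_le_one. split. apply Rabs_pos. apply rho_abs. }
      assert (0 <= Rabs c) by apply Rabs_pos. nra. }
  specialize (Z n). unfold K in Z.
  assert ((-1) ^ n <> 0) by (apply pow_nonzero; lra).
  apply Rmult_integral in Z. destruct Z as [Z|Z]; [contradiction|]. fold c. lra.
Qed.
End S.

Lemma sin_int_zero p q (z : Z) : 0 < q -> p + q < 0 ->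
  RInt (fun k => sin (k * IZR z) / (p - q * cos k)) 0 (2 * PI) = 0.
Proof.
  intros Hq Hpq. set (h := fun k => sin (k * IZR z) / (p - q * cos k)).
  assert (Hex : ex_RInt h (-1 * 0 + 2 * PI) (-1 * (2 * PI) + 2 * PI)).
  { apply (@ex_RInt_continuous R_CompleteNormedModule). intros x _.
    apply (@ex_derive_continuous R_AbsRing R_NormedModule). unfold h. auto_derive.
    apply (D_ne p q Hq Hpq). }
  assert (E := RInt_comp_lin h (-1) (2 * PI) 0 (2 * PI) Hex).
  replace (-1 * 0 + 2 * PI) with (2 * PI) in E by ring.
  replace (-1 * (2 * PI) + 2 * PI) with 0 in E by ring.
  assert (Hex2 : ex_RInt h 0 (2 * PI)).
  { apply (@ex_RInt_continuous R_CompleteNormedModule). intros x _.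
    apply (@ex_derive_continuous R_AbsRing R_NormedModule). unfold h. auto_derive.
    apply (D_ne p q Hq Hpq). }
  rewrite <- (opp_RInt_swap (V:=R_CompleteNormedModule) h 0 (2*PI) Hex2) in E.
  assert (S1 : sin (2 * PI * IZR z) = 0).
  { apply sin_eq_0_1. exists (2 * z)%Z. rewrite mult_IZR. simpl. ring. }
  assert (C1 : cos (2 * PI * IZR z) = 1).
  { replace (2 * PI * IZR z) with (2 * (PI * IZR z)) by ring. rewrite cos_2a_sin.
    rewrite sin_eq_0_1. ring. exists z. ring. }
  rewrite (RInt_ext _ h) in E.
  - unfold opp in E; simpl in E. lra.
  - intros x _. unfold h, scal; simpl. unfold mult; simpl.
    replace ((-1 * x + 2 * PI) * IZR z) with (2 * PI * IZR z - x * IZR z) by ring.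
    replace (-1 * x + 2 * PI) with (2 * PI - x) by ring.
    rewrite sin_minus, cos_minus, S1, C1, cos_2PI, sin_2PI.
    replace (1 * cos x + 0 * sin x) with (cos x) by ring. field. apply (D_ne p q Hq Hpq).
Qed.

Lemma cos_abs_nat k (n : Z) : cos (k * IZR n) = cos (k * INR (Z.abs_nat n)).
Proof.
  rewrite INR_IZR_INZ, Nat2Z.inj_abs_nat, abs_IZR.
  destruct (Rle_dec 0 (IZR n)).
  - rewrite Rabs_right; auto. lra.
  - rewrite Rabs_left by lra. rewrite <- cos_neg. f_equal. ring.
Qed.

Theorem mainTheorem3 (xi omega0 w : R) (n : Z) :
  0 < xi -> 0 < omega0 -> OmegaD xi omega0 < w ->
  Gn xi omega0 n w =
  ( (-1) / sqrt ((OmegaD xi omega0 ^ 2 - w ^ 2) * (Omega0 xi omega0 ^ 2 - w ^ 2)) *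
    ((OmegaD xi omega0 ^ 2 + Omega0 xi omega0 ^ 2 - 2 * w ^ 2
      + 2 * sqrt ((OmegaD xi omega0 ^ 2 - w ^ 2) * (Omega0 xi omega0 ^ 2 - w ^ 2)))
     / (OmegaD xi omega0 ^ 2 - Omega0 xi omega0 ^ 2)) ^ (Z.abs_nat n),
    0)%core.
Proof.
  intros Hxi Hom Hw.
  set (p := omega0 ^ 2 / xi ^ 2 * (xi ^ 2 + 1) - w ^ 2).
  set (q := 2 * omega0 ^ 2 / xi).
  assert (Hq : 0 < q). { unfold q. apply Rdiv_lt_0_compat; [|lra]. nra. }
  assert (HD : OmegaD xi omega0 ^ 2 - w ^ 2 = p + q).
  { unfold OmegaD, p, q. field. lra. }
  assert (H0 : Omega0 xi omega0 ^ 2 - w ^ 2 = p - q).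
  { unfold Omega0, p, q. rewrite Rpow_mult_distr, pow2_abs. field. lra. }
  assert (HS : OmegaD xi omega0 ^ 2 + Omega0 xi omega0 ^ 2 - 2 * w ^ 2 = 2 * p) by lra.
  assert (HT : OmegaD xi omega0 ^ 2 - Omega0 xi omega0 ^ 2 = 2 * q) by lra.
  assert (Hpq : p + q < 0).
  { rewrite <- HD. assert (0 < OmegaD xi omega0).
    { unfold OmegaD. apply Rmult_lt_0_compat. apply Rdiv_lt_0_compat; lra. lra. }
    nra. }
  assert (Hom2 : forall k, omega2 xi omega0 k - w ^ 2 = p - q * cos k).
  { intros k. unfold omega2, p, q. assert (X := sin2_cos2 k). unfold Rsqr in X.
    replace (sin k ^ 2) with (1 - cos k ^ 2) by nra. field. lra. }
  rewrite HS, HT, HD, H0.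
  replace ((p + q) * (p - q)) with (p * p - q * q) by ring.
  unfold Gn. f_equal.
  - rewrite (RInt_ext _ (gc p q (INR (Z.abs_nat n)))).
    2: { intros x _. unfold gc. rewrite Hom2, cos_abs_nat. auto. }
    fold (I p q (Z.abs_nat n)). rewrite (I_closed p q Hq Hpq).
    fold (s0 p q).
    assert (Hs := s0_pos p q Hq Hpq).
    replace ((2 * p + 2 * s0 p q) / (2 * q)) with (rho p q) by (unfold rho; field; lra).
    field. split; [lra|]. assert (PI_RGT_0 := PI_RGT_0). lra.
  - rewrite (RInt_ext _ (fun k => sin (k * IZR n) / (p - q * cos k))).
    2: { intros x _. rewrite Hom2. auto. }
    rewrite (sin_int_zero p q n Hq Hpq). field. assert (PI_RGT_0 := PI_RGT_0). lra.
Qed.
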